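(* Let $n\geq 3$ be odd, $m>1$ be odd, and let $G$ be a non-regular bipartite graph of order $m$ with a bipartition $\{A,B\}$ such that all vertices of $A$ have the same degree and all vertices of $B$ have the same degree. Then $\chi_{ld}(G[\overline{K_{n}}])=2$.
   Context: All graphs are finite, simple and undirected, without isolated vertices. For a graph $G=(V,E)$ of order $N$ without isolated vertices, a bijection $f\colon V\to\{1,2,\dots,N\}$ is a local distance antimagic labeling if $w(u)\neq w(v)$ for every edge $uv$, where $w(u)=\sum_{x\in N(u)}f(x)$ and $N(u)$ is the open neighborhood of $u$. $\chi_{ld}(G)$ is the minimum number of distinct weights over all local distance antimagic labelings of $G$. $\overline{K_n}$ is the edgeless graph on $n$ vertices. The lexicographic product $G[H]$ has vertex set $V(G)\times V(H)$, with $(g,h)$ adjacent to $(g',h')$ iff $gg'\in E(G)$, or $g=g'$ and $hh'\in E(H)$. *)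

(* Defs.v *)
From mathcomp Require Import all_boot.
Set Implicit Arguments. Unset Strict Implicit. Unset Printing Implicit Defensive.

Definition simple_graph (V : finType) (e : rel V) : Prop :=
  (forall x y, e x y = e y x) /\ (forall x, ~~ e x x).

Definition deg (V : finType) (e : rel V) (x : V) : nat := #|[set y | e x y]|.

Definition no_isolated (V : finType) (e : rel V) : Prop :=
  forall x, 0 < deg e x.

Definition weight (V : finType) (e : rel V) (f : V -> nat) (u : V) : nat :=
  \sum_(x | e u x) f x.

Definition bij_label (V : finType) (f : V -> nat) : Prop :=
  injective f /\ (forall v, 1 <= f v <= #|V|).

Definition ld_antimagic (V : finType) (e : rel V) (f : V -> nat) : Prop :=
  bij_label f /\ (forall u v, e u v -> weight e f u != weight e f v).

Definition num_weights (V : finType) (e : rel V) (f : V -> nat) : nat :=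
  size (undup [seq weight e f v | v <- enum V]).

Definition chi_ld_eq (V : finType) (e : rel V) (k : nat) : Prop :=
  (exists f, ld_antimagic e f /\ num_weights e f = k) /\
  (forall f, ld_antimagic e f -> k <= num_weights e f).

Definition lex_prod (V W : finType) (e : rel V) (h : rel W) : rel (V * W) :=
  fun p q => e p.1 q.1 || ((p.1 == q.1) && h p.2 q.2).

Definition edgeless (n : nat) : rel 'I_n := fun _ _ => false.

(* Main.v *)
Require Import Defs.
From mathcomp Require Import all_boot.
From mathcomp Require Import zify.

Definition sg (h r : nat) : nat := if r <= h then h + r else r - h - 1.
Definition tg (h r : nat) : nat := if r <= h then 2 * h - 2 * r else 4 * h + 1 - 2 * r.
Definition pj (m j r : nat) : nat :=
  if j == 0 then r else if j == 1 then sg m./2 r else if j == 2 then tg m./2 r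
  else if odd j then r else m.-1 - r.
Definition Lab (m j r : nat) : nat := j * m + pj m j r.

Lemma oddE m : odd m -> m = 2 * m./2 + 1.
Proof. move=> H; have := odd_double_half m; rewrite H; lia. Qed.

Lemma pj_big m j r : 3 <= j -> pj m j r = if odd j then r else m.-1 - r.
Proof. by case: j => [|[|[|j]]]. Qed.

Lemma pj_lt m j r : odd m -> r < m -> pj m j r < m.
Proof.
move=> /oddE Hm Hr; rewrite /pj /sg /tg.
move: Hm; set h := m./2 => Hm.
case: (j == 0) => //=; case: (j == 1) => /=; first by case: (leqP r h); lia.
case: (j == 2) => /=; first by case: (leqP r h); lia.
case: (odd j) => //; lia.
Qed.

Lemma pj_inj m j r r' : odd m -> r < m -> r' < m -> pj m j r = pj m j r' -> r = r'.
Proof.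
move=> /oddE Hm Hr Hr'; rewrite /pj /sg /tg.
move: Hm; set h := m./2 => Hm.
case: (j == 0) => //=; case: (j == 1) => /=; first by case: (leqP r h); case: (leqP r' h); lia.
case: (j == 2) => /=; first by case: (leqP r h); case: (leqP r' h); lia.
case: (odd j) => //; lia.
Qed.

Lemma Lab_inj m j j' r r' : odd m -> r < m -> r' < m ->
  Lab m j r = Lab m j' r' -> j = j' /\ r = r'.
Proof.
move=> Hm Hr Hr' H.
have H1 := @pj_lt m j r Hm Hr; have H2 := @pj_lt m j' r' Hm Hr'.
have Hj : j = j' by move: H; rewrite /Lab; nia.
split => //; subst j'; apply: (@pj_inj m j r r' Hm Hr Hr'); move: H; rewrite /Lab; lia.
Qed.

Lemma big_nat3 (F : nat -> nat) : \sum_(0 <= j < 3) F j = F 0 + F 1 + F 2.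
Proof. by rewrite big_nat_recr //= big_nat_recr //= big_nat_recr //= big_geq. Qed.

Lemma big_nat2 (F : nat -> nat) n : \sum_(0 <= j < n.+2) F j = \sum_(0 <= j < n) F j + F n + F n.+1.
Proof. by rewrite big_nat_recr //= big_nat_recr //= addnA. Qed.

Lemma sum_const m n r : odd n -> 3 <= n -> odd m -> r < m ->
  \sum_(0 <= j < n) (Lab m j r).+1 = \sum_(0 <= j < n) (Lab m j 0).+1.
Proof.
move=> Hn Hn3 Hm Hr.
have [k ->] : exists k, n = k.*2.+3.
  exists (n./2).-1; have := @oddE n Hn; lia.
have Hm' := @oddE m Hm; move: Hm'; set h := m./2 => Hm'.
elim: k => [|k IH].
  rewrite double0 !big_nat3 /Lab /pj /sg /tg /= -/h.
  case: (leqP r h) => ?; lia.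
rewrite doubleS !(big_nat2 _ k.*2.+3) IH.
rewrite /Lab !pj_big //= odd_double /=.
lia.
Qed.

Theorem mainTheorem18 (n m : nat) (V : finType) (e : rel V) (A B : {set V}) :
  3 <= n -> odd n -> 1 < m -> odd m ->
  simple_graph e -> no_isolated e -> #|V| = m ->
  (* {A, B} is a bipartition of V *)
  A :&: B = set0 -> A :|: B = [set: V] ->
  (forall x y, e x y -> (x \in A) = (y \in B)) ->
  (* all vertices of A have the same degree, likewise for B *)
  {in A &, forall x y, deg e x = deg e y} ->
  {in B &, forall x y, deg e x = deg e y} ->
  (* G is not regular *)
  (exists x y, deg e x != deg e y) ->
  chi_ld_eq (lex_prod e (@edgeless n)) 2.
Proof.
move=> Hn3 Hodn Hm1 Hodm Hsg Hni HV HAB HAuB Hbip HA HB [x0 [y0 Hxy]].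
have Hcov : forall w, (w \in A) || (w \in B).
  by move=> w; rewrite -in_setU HAuB inE.
have HnB : forall w, w \notin B -> w \in A.
  by move=> w; have := Hcov w; case: (w \in A); case: (w \in B).
have HnA : forall w, w \notin A -> w \in B.
  by move=> w; have := Hcov w; case: (w \in A); case: (w \in B).
have Hdeg2 : forall u v, e u v -> forall z, deg e z = deg e u \/ deg e z = deg e v.
  move=> u v Huv z.
  have Hb := Hbip _ _ Huv.
  case/orP: (Hcov z) => Hz; case Hu: (u \in A) in Hb.
  - by left; apply: HA.
  - by right; apply: HA => //; apply: HnB; rewrite -Hb.
  - by right; apply: HB => //; rewrite -Hb.
  - by left; apply: HB => //; apply: HnA; rewrite Hu.
have Hneq : forall u v, e u v -> deg e u != deg e v.
  move=> u v Huv; apply/eqP => Heq; move: Hxy.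
  by case: (Hdeg2 _ _ Huv x0) => ->; case: (Hdeg2 _ _ Huv y0) => ->; rewrite ?Heq eqxx.
have [v0 Huv0] : exists v, e x0 v.
  by move: (Hni x0); rewrite /deg card_gt0 => /set0Pn [y]; rewrite inE => ?; exists y.
have Hn0 : 0 < n by apply: leq_trans Hn3.
set i0 : 'I_n := Ordinal Hn0.
set g := lex_prod e (@edgeless n).
have Hlow : forall f, ld_antimagic g f -> 2 <= num_weights g f.
  move=> f [_ Hw].
  have He : g (x0, i0) (v0, i0) by rewrite /g /lex_prod /= Huv0.
  have Hne := Hw _ _ He.
  rewrite /num_weights.
  have <- : size [:: weight g f (x0, i0); weight g f (v0, i0)] = 2 by [].
  apply: uniq_leq_size; first by rewrite /= inE Hne.
  move=> z; rewrite !inE mem_undup => /orP [] /eqP ->; apply: map_f; by rewrite mem_enum.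
set f := fun p : V * 'I_n => (Lab m p.2 (enum_rank p.1)).+1.
set C := \sum_(0 <= j < n) (Lab m j 0).+1.
have HC : 0 < C by rewrite /C big_ltn.
have Hr : forall v : V, (enum_rank v : nat) < m.
  by move=> v; rewrite -HV; apply: ltn_ord.
have Hwt : forall p, weight g f p = deg e p.1 * C.
  case=> v i; rewrite /weight /=.
  rewrite (eq_bigl (fun p : V * 'I_n => e v p.1 && true)); last first.
    by case=> u j; rewrite /g /lex_prod /edgeless /= andbF orbF andbT.
  have -> : \sum_(p | e v p.1 && true) f p =
            \sum_(u | e v u) \sum_(j : 'I_n | true) f (u, j) by rewrite pair_big_dep.
  rewrite (eq_bigr (fun _ => C)); last first.
    move=> u _; rewrite /f /=.
    rewrite -(big_mkord xpredT (fun j => (Lab m j (enum_rank u)).+1)).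
    exact: sum_const.
  rewrite /deg -sum_nat_const; apply: eq_bigl => u; by rewrite inE.
have Hanti : ld_antimagic g f.
  split; last first.
    move=> p q Hpq; rewrite !Hwt eqn_pmul2r //; apply: Hneq.
    by move: Hpq; rewrite /g /lex_prod /edgeless andbF orbF.
  split.
    move=> [v j] [v' j'] /= /eqP; rewrite eqSS => /eqP H.
    have [Hj Hrr] := @Lab_inj m j j' _ _ Hodm (Hr v) (Hr v') H.
    have -> : v = v' by apply: enum_rank_inj; apply: val_inj.
    by have -> : j = j' by apply: val_inj.
  move=> [v j]; rewrite /f /= card_prod card_ord.
  have := @pj_lt m j _ Hodm (Hr v); have := ltn_ord j; rewrite /Lab.
  move: (nat_of_ord (enum_rank v)) => r; rewrite HV; nia.
split; last exact: Hlow.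
exists f; split => //.
apply/eqP; rewrite eqn_leq Hlow // andbT.
rewrite /num_weights.
have <- : size [:: deg e x0 * C; deg e v0 * C] = 2 by [].
apply: uniq_leq_size; first exact: undup_uniq.
move=> w; rewrite mem_undup => /mapP [[z j] _ ->]; rewrite Hwt !inE /=.
by case: (Hdeg2 _ _ Huv0 z) => ->; rewrite eqxx ?orbT.
Qed.
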